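(* For all integers $0\le k\le l$, the ideal $I_{l,k}=(h_{l,k,0},h_{l,k,1},\dots,h_{l,k,k})$ of $\mathbb{Z}[q,q^{-1}]$ is principal, generated by $g_{l,k}=\mathrm{GCD}(h_{l,k,0},\dots,h_{l,k,k})$.
   Context: In $\mathbb{Z}[q,q^{-1}]$ set $\{i\}_q=q^i-1$, $\{i\}_{q,n}=\{i\}_q\{i-1\}_q\cdots\{i-n+1\}_q$ (equal to $1$ for $n=0$), $\{n\}_q!=\{n\}_{q,n}$. For $0\le i\le k\le l$ set $h_{l,k,i}=\{l-i\}_{q,k-i}\,\{i\}_q!$. $(a_1,\dots,a_r)$ denotes the ideal generated by $a_1,\dots,a_r$; GCD is a greatest common divisor in the UFD $\mathbb{Z}[q,q^{-1}]$ (defined up to units $\pm q^j$). *)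

(* Defs.v *)
(* Z[q,q^-1] is modelled as the subring of the fraction field
   Frac(Z[q]) = {fraction {poly int}} consisting of elements p / q^n. *)
From HB Require Import structures.
From mathcomp Require Import all_boot all_order all_algebra.
From mathcomp Require Import fraction.
Set Implicit Arguments. Unset Strict Implicit. Unset Printing Implicit Defensive.
Import Order.TTheory GRing.Theory Num.Theory.
Local Open Scope ring_scope.

Definition Lfield := {fraction {poly int}}.
Notation tof := (@tofrac {poly int}).

Definition qbr (i : nat) : {poly int} := 'X^i - 1.
Definition qfall (i n : nat) : {poly int} := \prod_(j < n) qbr (i - j)%N.
Definition qfact (n : nat) : {poly int} := qfall n n.
Definition hlki (l k i : nat) : {poly int} := qfall (l - i)%N (k - i)%N * qfact i.

Definition inLaurent (x : Lfield) : Prop :=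
  exists (p : {poly int}) (n : nat), x = tof p / tof ('X^n : {poly int}).

Definition ldvd (a b : Lfield) : Prop := exists c, inLaurent c /\ b = a * c.

Definition inIlk (l k : nat) (x : Lfield) : Prop :=
  exists c : 'I_k.+1 -> Lfield, (forall i, inLaurent (c i)) /\
    x = \sum_(i < k.+1) c i * tof (hlki l k i).

Definition isGCDlk (l k : nat) (g : Lfield) : Prop :=
  inLaurent g /\ (forall i : 'I_k.+1, ldvd g (tof (hlki l k i))) /\
  (forall d, inLaurent d -> (forall i : 'I_k.+1, ldvd d (tof (hlki l k i))) -> ldvd d g).

(* Main.v *)
Require Import Defs.
From HB Require Import structures.
From mathcomp Require Import all_boot all_order all_algebra.
From mathcomp Require Import fraction.
From mathcomp Require Import cyclotomic.
From mathcomp Require Import ring zify.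
From Stdlib Require Import Classical.
Import Order.TTheory GRing.Theory Num.Theory.

Module C3.
Set Implicit Arguments. Unset Strict Implicit. Unset Printing Implicit Defensive.

Lemma cnt_sum d a n : (0 < d) ->
  \sum_(j < n) (d %| a + (n - j)) + a %/ d = (a + n) %/ d.
Proof.
move=> d0; elim: n => [|n IH]; first by rewrite big_ord0 addn0.
rewrite big_ord_recl /= subn0 addnS divnS // -IH -addnA; idtac.
congr (_ + (_ + _)); apply: eq_bigr => j _; by rewrite /bump /= add1n subSS.
Qed.

Lemma beta_mod l i d : (0 < d) -> (i <= l) ->
  (d <= i %% d + (l - i) %% d) = (l %% d < i %% d).
Proof.
move=> d0 il.
have r1 : i %% d < d by rewrite ltn_mod.
have r2 : (l - i) %% d < d by rewrite ltn_mod.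
have E : l %% d = (i %% d + (l - i) %% d) %% d by rewrite modnDm subnKC.
case: (leqP d (i %% d + (l - i) %% d)) => h.
  have E2 : l %% d = i %% d + (l - i) %% d - d.
    rewrite E -{1}(subnK h) modnDr modn_small //; lia.
  apply/esym; rewrite E2; lia.
apply/esym; rewrite E modn_small //; lia.
Qed.

Section Comb.
Variables l k : nat.
Hypothesis hkl : k <= l.

Definition E (i d : nat) : nat :=
  \sum_(j < k - i) (d %| (l - i) - j) + \sum_(j < i) (d %| i - j).

Lemma E_formula i d : 0 < d -> i <= k ->
  E i d + (l - k) %/ d + (l %% d < i %% d) = l %/ d.
Proof.
move=> d0 ik.
have H1 : \sum_(j < k - i) (d %| (l - i) - j) = \sum_(j < k - i) (d %| (l - k) + ((k - i) - j)).
  apply: eq_bigr => j _; have := ltn_ord j => hj; have -> : l - i - j = l - k + (k - i - j) by lia. done.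
have C1 := cnt_sum (l - k) (k - i) d0.
have C2 := cnt_sum 0 i d0.
rewrite div0n addn0 add0n in C2.
have H2 : \sum_(j < i) (d %| i - j) = \sum_(j < i) (d %| 0 + (i - j)).
  by apply: eq_bigr => j _; rewrite add0n.
have C3 := divnD i (l - i) d0.
rewrite subnKC ?(leq_trans ik hkl) // beta_mod ?(leq_trans ik hkl) // in C3.
have E4 : l - k + (k - i) = l - i by lia.
rewrite E4 in C1.
rewrite /E H1 H2.
move: C1 C2 C3.
set S1 := \sum_(j < k - i) _.
set S2 := \sum_(j < i) _.
set b := (_ < _).
lia.
Qed.

Lemma E_le i j x : 0 < x -> i <= k -> j <= k ->
  ((l %% x < j %% x) -> (l %% x < i %% x)) -> E i x <= E j x.
Proof.
move=> x0 ik jk H.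
have Fi := E_formula x0 ik; have Fj := E_formula x0 jk.
move: Fi Fj H.
case: (l %% x < j %% x); case: (l %% x < i %% x) => //=; try lia.
Qed.

Lemma exp_small n0 p e : prime p -> 0 < n0 * p ^ e -> e < n0 * p ^ e.
Proof.
move=> pp x0.
have n00 : 0 < n0 by move: x0; rewrite muln_gt0 => /andP[].
apply: (leq_trans (ltn_expl e (prime_gt1 pp))).
by rewrite leq_pmull.
Qed.

Lemma key n0 p : prime p -> exists i, i <= k /\ forall e',
  0 < n0 * p ^ e' -> n0 * p ^ e' <= l -> forall j, j <= k -> E i (n0 * p ^ e') <= E j (n0 * p ^ e').
Proof.
move=> pp.
pose T (e : 'I_l.+1) := [&& 0 < n0 * p ^ e, n0 * p ^ e <= l &
  [exists j : 'I_k.+1, l %% (n0 * p ^ e) < j %% (n0 * p ^ e)]].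
have Tof : forall e' j, 0 < n0 * p ^ e' -> n0 * p ^ e' <= l -> j <= k ->
    l %% (n0 * p ^ e') < j %% (n0 * p ^ e') ->
    exists e : 'I_l.+1, nat_of_ord e = e' /\ T e.
  move=> e' j x0 xl jk lt.
  have el : e' < l.+1 by apply: (leq_trans (exp_small pp x0)); exact: leqW.
  exists (Ordinal el); split => //; rewrite /T /= x0 xl /=.
  by apply/existsP; exists (Ordinal (jk : j < k.+1)).
case: (pickP T) => [e0 He0 | Hno]; last first.
  exists 0; split => // e' x0 xl j jk; apply: E_le => // lt.
  by have [e [_ Te]] := Tof e' j x0 xl jk lt; move: (Hno e); rewrite Te.
case: (@arg_maxnP _ e0 T id He0) => es Tes Hmax.
move: Tes; rewrite /T => /and3P[D0 Dl /existsP[j0 Hj0]].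
set D := n0 * p ^ es in D0 Dl Hj0.
have ik : (l %% D).+1 <= k.
  apply: (leq_trans Hj0); apply: (leq_trans (leq_mod _ _)); rewrite -ltnS; exact: ltn_ord.
exists (l %% D).+1; split => //.
move=> e' x0 xl j jk; apply: E_le => // lt.
have [e [Ee Te]] := Tof e' j x0 xl jk lt.
have ees : e' <= es by rewrite -Ee; apply: Hmax.
have xD : n0 * p ^ e' %| D by rewrite /D dvdn_mul // dvdn_exp2l.
set x := n0 * p ^ e' in x0 xl lt xD *.
have xlt : (l %% x).+1 < x.
  apply: leq_ltn_trans lt _; by rewrite ltn_mod.
have E1 : ((l %% D).+1) %% x = (l %% x + 1) %% x.
  by rewrite -addn1 -[in LHS](modnDml (l %% D) 1 x) (modn_dvdm l xD).
by rewrite E1 (@modn_small (l %% x + 1)) ?addn1.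
Qed.
End Comb.

End C3.
Import C3.

Module C1.
Set Implicit Arguments. Unset Strict Implicit. Unset Printing Implicit Defensive.
Local Open Scope ring_scope.

Local Notation P := {poly int}.

Definition inI2 (x y z : P) := exists u v, z = u * x + v * y.
Definition comax (x y : P) := inI2 x y 1.

Lemma inI2_add x y z z' : inI2 x y z -> inI2 x y z' -> inI2 x y (z + z').
Proof.
move=> [u [v ->]] [u' [v' ->]]; exists (u + u'), (v + v').
by rewrite !mulrDl addrACA.
Qed.

Lemma inI2_mul x y z c : inI2 x y z -> inI2 x y (c * z).
Proof.
move=> [u [v ->]]; exists (c * u), (c * v).
by rewrite mulrDr !mulrA.
Qed.

Lemma inI2_l x y c : inI2 x y (x * c).
Proof. by exists c, 0; rewrite mul0r addr0 mulrC. Qed.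

Lemma inI2_r x y c : inI2 x y (y * c).
Proof. by exists 0, c; rewrite mul0r add0r mulrC. Qed.

Lemma comax_sym x y : comax x y -> comax y x.
Proof. by move=> [u [v E]]; exists v, u; rewrite addrC. Qed.

Lemma inI2_dvd x y x' y' z : inI2 x' y' z ->
  (exists a, x' = x * a) -> (exists b, y' = y * b) -> inI2 x y z.
Proof.
move=> [u [v ->]] [a ->] [b ->]; exists (u * a), (v * b).
by rewrite [x * a]mulrC [y * b]mulrC !mulrA.
Qed.

Lemma comax_subl x y z : comax (x - z * y) y -> comax x y.
Proof.
move=> [u [v E]]; exists u, (v - u * z).
by rewrite E; ring.
Qed.

Lemma comax_1r x : comax x 1.
Proof. by exists 0, 1; rewrite mul0r add0r mulr1. Qed.

Definition qn (n : nat) : P := 'X^n - 1.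
Definition Rq (A c : nat) : P := \sum_(j < A) 'X^(c * j).

Lemma RqD A B c : Rq (A + B) c = Rq A c + 'X^(c * A) * Rq B c.
Proof.
rewrite /Rq big_split_ord /=; congr (_ + _).
rewrite mulr_sumr; apply: eq_bigr => i _ /=.
by rewrite mulnDr exprD.
Qed.

Lemma Rq0 c : Rq 0 c = 0.
Proof. by rewrite /Rq big_ord0. Qed.

Lemma Rq1 c : Rq 1 c = 1.
Proof. by rewrite /Rq big_ord1 muln0 expr0. Qed.

Lemma qn_Rq c A : qn (c * A) = qn c * Rq A c.
Proof.
elim: A => [|A IH]; first by rewrite Rq0 muln0 /qn expr0 subrr mulr0.
rewrite -addn1 RqD Rq1 mulr1 mulrDr -IH /qn mulnDr muln1 exprD.
by ring.
Qed.

Lemma Rq_comax c A B : coprime A B -> comax (Rq A c) (Rq B c).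
Proof.
move: {2}(A + B)%N (leqnn (A + B)) => n.
elim: n A B => [|n IH] A B.
  by rewrite leqn0 addn_eq0 => /andP[/eqP-> /eqP->]; rewrite /coprime gcdn0.
move=> hn cAB.
case: (posnP A) => [A0|Apos].
  move: cAB; rewrite A0 /coprime gcd0n => /eqP->; rewrite Rq1; exact: comax_1r.
case: (posnP B) => [B0|Bpos].
  move: cAB; rewrite B0 /coprime gcdn0 => /eqP->; rewrite Rq1.
  by apply: comax_sym; apply: comax_1r.
case: (leqP B A) => hBA.
- apply: (@comax_subl _ _ ('X^(c * (A - B)))).
  have ->: Rq A c - 'X^(c * (A - B)) * Rq B c = Rq (A - B) c.
    by rewrite -{1}(subnK hBA) RqD addrK.
  apply: IH.
    by rewrite subnK //; rewrite -ltnS (leq_trans _ hn) //; lia.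
  by rewrite /coprime gcdnC -gcdnDr subnK // gcdnC.
- apply: comax_sym.
  apply: (@comax_subl _ _ ('X^(c * (B - A)))).
  have ->: Rq B c - 'X^(c * (B - A)) * Rq A c = Rq (B - A) c.
    by rewrite -{1}(subnK (ltnW hBA)) RqD addrK.
  apply: IH.
    by rewrite subnK ?(ltnW hBA) //; rewrite -ltnS (leq_trans _ hn) //; lia.
  by rewrite /coprime gcdnC -gcdnDr subnK ?(ltnW hBA) //.
Qed.

Lemma big_divisors (F : nat -> P) N n : (0 < n)%N -> (n < N)%N ->
  \prod_(d <- divisors n) F d = \prod_(d < N | (d %| n)%N) F d.
Proof.
move=> n0 nN.
rewrite -(big_mkord (fun d => (d %| n)%N) F) -[RHS]big_filter.
suff ->: [seq i <- index_iota 0 N | (i %| n)%N] = divisors n by [].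
rewrite /index_iota subn0.
apply: (@irr_sorted_eq _ ltn); first exact: ltn_trans.
- exact: ltnn.
- by apply: sorted_filter; [exact: ltn_trans | exact: iota_ltn_sorted].
- exact: sorted_divisors_ltn.
move=> d; rewrite mem_filter mem_iota add0n -dvdn_divisors //.
case dn: ((d %| n)%N) => //=.
by rewrite (leq_ltn_trans (dvdn_leq n0 dn)).
Qed.

Lemma qn_cyc N n : (0 < n)%N -> (n < N)%N -> qn n = \prod_(d < N | (d %| n)%N) 'Phi_d.
Proof. by move=> n0 nN; rewrite -big_divisors // prod_Cyclotomic. Qed.

Lemma qn_neq0 n : (0 < n)%N -> qn n != 0.
Proof. by move=> n0; rewrite monic_neq0 // /qn -[1]/(1%:P) monicXnsubC. Qed.

Lemma qn_split N n c : (0 < n)%N -> (0 < c)%N -> (c %| n)%N -> (n < N)%N ->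
  qn n = qn c * \prod_(d < N | ((d %| n)%N) && ~~ ((d %| c)%N)) 'Phi_d.
Proof.
move=> n0 c0 cn nN.
rewrite (qn_cyc n0 nN) (bigID (fun d : 'I_N => (d %| c)%N)) /=.
rewrite (qn_cyc c0 (leq_ltn_trans (dvdn_leq n0 cn) nN)); congr (_ * _).
apply: eq_bigl => d; apply/idP/idP => [/andP[] //|dc].
by rewrite dc (dvdn_trans dc cn).
Qed.

Lemma Phi_dvd_Rq n c : (0 < n)%N -> (0 < c)%N -> (c %| n)%N -> (c < n)%N ->
  exists r, Rq (n %/ c) c = 'Phi_n * r.
Proof.
move=> n0 c0 cn cltn.
have E1 := qn_split n0 c0 cn (ltnSn n).
have E2 : qn n = qn c * Rq (n %/ c) c by rewrite -qn_Rq mulnC divnK.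
move: E1; rewrite E2 => /(mulfI (qn_neq0 c0)) ->.
rewrite (bigD1 ord_max) /=; first by eexists.
by rewrite dvdnn gtnNdvd.
Qed.

Lemma Phi_dvd_qn n : (0 < n)%N -> exists r, qn n = 'Phi_n * r.
Proof.
move=> n0; rewrite (qn_cyc n0 (ltnSn n)) (bigD1 ord_max) /=; first by eexists.
exact: dvdnn.
Qed.

Lemma qn_dvd a m : (a %| m)%N -> exists r, qn m = qn a * r.
Proof. by move=> am; exists (Rq (m %/ a) a); rewrite -qn_Rq mulnC divnK. Qed.

Lemma Rq_mod a A c : (a %| c)%N -> exists w, Rq A c = A%:R + qn a * w.
Proof.
move=> ac; elim: A => [|A [w Hw]]; first by exists 0; rewrite Rq0 mulr0 addr0.
have [r Hr] := qn_dvd (dvdn_mulr A ac).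
exists (w + r); rewrite -addn1 RqD Rq1 mulr1 Hw.
have ->: 'X^(c * A) = qn (c * A) + 1 by rewrite /qn subrK.
by rewrite Hr natrD; ring.
Qed.

Definition linked (a b : nat) := exists n0 p e e',
  prime p /\ a = (n0 * p ^ e)%N /\ b = (n0 * p ^ e')%N.

Lemma linked_sym a b : linked a b -> linked b a.
Proof. by move=> [n0 [p [e [e' [pp [-> ->]]]]]]; exists n0, p, e', e. Qed.

Lemma natP (n : nat) : (n%:R : P) = (Posz n)%:P.
Proof. by rewrite -polyC_natr natz. Qed.

Lemma Phi_comax_div a b : (0 < a)%N -> (0 < b)%N -> (a %| b)%N -> ~ linked a b ->
  comax 'Phi_a 'Phi_b.
Proof.
move=> a0 b0 ab nl.
pose t := (b %/ a)%N.
have bE : b = (a * t)%N by rewrite /t mulnC divnK.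
have t0 : (0 < t)%N by move: b0; rewrite bE muln_gt0 => /andP[].
have t1 : (1 < t)%N.
  rewrite ltn_neqAle t0 andbT; apply/negP => /eqP t1; apply: nl.
  by exists a, 2%N, 0%N, 0%N; rewrite bE -t1 !muln1.
have pp := pdiv_prime t1.
have pt := pdiv_dvd t.
have claim : forall r, prime r -> (r %| t)%N -> inI2 'Phi_a 'Phi_b r%:R.
  move=> r rp rt.
  pose c := (b %/ r)%N.
  have r0 : (0 < r)%N := prime_gt0 rp.
  have rb : (r %| b)%N by rewrite bE dvdn_mull.
  have bE' : b = (c * r)%N by rewrite /c divnK.
  have c0 : (0 < c)%N by move: b0; rewrite bE' muln_gt0 => /andP[].
  have cb : (c < b)%N by rewrite /c ltn_Pdiv ?prime_gt1.
  have cdb : (c %| b)%N by rewrite bE' dvdn_mulr.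
  have [y Hy] := Phi_dvd_Rq b0 c0 cdb cb.
  have bc : (b %/ c)%N = r by rewrite bE' mulKn.
  rewrite bc in Hy.
  have ac : (a %| c)%N by rewrite /c bE -muln_divA // dvdn_mulr.
  have [w Hw] := Rq_mod r ac.
  have [s Hs] := Phi_dvd_qn a0.
  exists (- (s * w)), y.
  move: Hy; rewrite Hw Hs => Hy.
  have ->: (r%:R : P) = 'Phi_b * y - 'Phi_a * s * w by rewrite -Hy; ring.
  ring.
have : ~~ (pdiv t).-nat t.
  apply/negP => ptn; apply: nl.
  exists a, (pdiv t), 0%N, (logn (pdiv t) t).
  by rewrite expn0 muln1 -p_part part_pnat_id.
rewrite /pnat t0 /= => /allPn [p' p'in p'np].
move: p'in; rewrite mem_primes => /and3P[p'p _ p't].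
have neq : p' != pdiv t.
  by apply: contra p'np => /eqP->; rewrite inE.
have cop : coprime (pdiv t) p'.
  by rewrite prime_coprime // dvdn_prime2 // eq_sym.
have [u [v Huv]] := Bezoutz (Posz (pdiv t)) (Posz p').
have H1 : (1 : P) = u%:P * (pdiv t)%:R + v%:P * p'%:R.
  rewrite !natP -!polyCM -polyCD Huv /gcdz /=.
  by move: cop; rewrite /coprime => /eqP->.
rewrite /comax H1.
by apply: inI2_add; apply: inI2_mul; apply: claim.
Qed.

Lemma Phi_comax a b : (0 < a)%N -> (0 < b)%N -> ~ linked a b -> comax 'Phi_a 'Phi_b.
Proof.
move=> a0 b0 nl.
case ab: (a %| b)%N; first exact: Phi_comax_div.
case ba: (b %| a)%N.
  apply: comax_sym; apply: Phi_comax_div => // /linked_sym; exact: nl.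
pose g := gcdn a b.
have g0 : (0 < g)%N by rewrite gcdn_gt0 a0.
have ga : (g %| a)%N := dvdn_gcdl a b.
have gb : (g %| b)%N := dvdn_gcdr a b.
have gla : (g < a)%N.
  rewrite ltn_neqAle dvdn_leq // andbT; apply/negP => /eqP ga'.
  by move: (dvdn_gcdr a b); rewrite -/g ga' ab.
have glb : (g < b)%N.
  rewrite ltn_neqAle dvdn_leq // andbT; apply/negP => /eqP gb'.
  by move: (dvdn_gcdl a b); rewrite -/g gb' ba.
have [x Hx] := Phi_dvd_Rq a0 g0 ga gla.
have [y Hy] := Phi_dvd_Rq b0 g0 gb glb.
have cop : coprime (a %/ g) (b %/ g).
  by rewrite /coprime -(eqn_pmul2r g0) mul1n muln_gcdl !divnK.
apply: (inI2_dvd (Rq_comax g cop)); [by exists x | by exists y].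
Qed.

End C1.
Import C1.

Module C2.
Set Implicit Arguments. Unset Strict Implicit. Unset Printing Implicit Defensive.
Local Open Scope ring_scope.

Local Notation P := {poly int}.

Lemma linked_dvd a b : (0 < a)%N -> (a <= b)%N -> linked a b ->
  exists p e, prime p /\ b = (a * p ^ e)%N.
Proof.
move=> a0 ab [n0 [p [e [e' [pp [Ea Eb]]]]]].
have n00 : (0 < n0)%N by move: a0; rewrite Ea muln_gt0 => /andP[].
have ee : (e <= e')%N.
  by move: ab; rewrite Ea Eb leq_pmul2l // leq_exp2l // prime_gt1.
by exists p, (e' - e)%N; split => //; rewrite Ea Eb -mulnA -expnD subnKC.
Qed.

Lemma not_all_linked n (d : 'I_n -> nat) : (forall i, 0 < d i)%N ->
  (forall n0 p, prime p -> exists i, forall e, d i <> (n0 * p ^ e)%N) ->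
  exists i j, ~ linked (d i) (d j).
Proof.
move=> dpos Hch.
apply: NNPP => Hn.
have H : forall i j, linked (d i) (d j).
  move=> i j; apply: NNPP => nl; apply: Hn; by exists i, j.
have [i _] := Hch 1%N 2%N isT.
have [i0 _ Hmin] := @arg_minnP _ i (fun _ => true) d isT.
have [i1 _ Hmax] := @arg_maxnP _ i (fun _ => true) d isT.
have [p [E [pp E1]]] := linked_dvd (dpos _) (Hmin i1 isT) (H _ _).
have [j Hj] := Hch (d i0) p pp.
have [p2 [e2 [_ E2]]] := linked_dvd (dpos _) (Hmin j isT) (H _ _).
have [p3 [e3 [_ E3]]] := linked_dvd (dpos _) (Hmax j isT) (H _ _).
have : (p2 ^ e2 %| p ^ E)%N.
  rewrite -(@dvdn_pmul2l (d i0)) ?dpos // -E2 -E1 E3 dvdn_mulr //.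
case/(dvdn_pfactor _ _ pp) => f _ Ef.
by apply: (Hj f); rewrite E2 Ef.
Qed.

Definition inGen n (u : 'I_n -> P) (z : P) := exists c : 'I_n -> P, z = \sum_i c i * u i.

Lemma inGen_gen n (u : 'I_n -> P) i : inGen u (u i).
Proof.
exists (fun j => if j == i then 1 else 0).
rewrite (bigD1 i) //= eqxx mul1r big1 ?addr0 // => j /negbTE ->; exact: mul0r.
Qed.

Lemma inGen_add n (u : 'I_n -> P) x y : inGen u x -> inGen u y -> inGen u (x + y).
Proof.
move=> [c ->] [c' ->]; exists (fun i => c i + c' i).
by rewrite -big_split; apply: eq_bigr => i _; rewrite mulrDl.
Qed.

Lemma inGen_mul n (u : 'I_n -> P) x y : inGen u y -> inGen u (x * y).
Proof.
move=> [c ->]; exists (fun i => x * c i).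
by rewrite mulr_sumr; apply: eq_bigr => i _; rewrite mulrA.
Qed.

Lemma inGen_0 n (u : 'I_n -> P) : inGen u 0.
Proof. by exists (fun _ => 0); rewrite big1 // => i _; rewrite mul0r. Qed.

Lemma inGen_incl n m (u : 'I_n -> P) (v : 'I_m -> P) x z :
  (forall j, inGen u (x * v j)) -> inGen v z -> inGen u (x * z).
Proof.
move=> H [c ->]; rewrite mulr_sumr.
elim/big_ind: _ => //; [exact: inGen_0 | exact: inGen_add |].
by move=> j _; rewrite mulrCA; apply: inGen_mul.
Qed.

Lemma inGen_ext n (u v : 'I_n -> P) z : u =1 v -> inGen u z -> inGen v z.
Proof. by move=> E [c ->]; exists c; apply: eq_bigr => i _; rewrite E. Qed.

Definition upd {T : Type} n (u : 'I_n -> T) i x := fun j => if j == i then x else u j.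

Lemma unit_split n (u : 'I_n -> P) i a b :
  inGen (upd u i a) 1 -> inGen (upd u i b) 1 -> inGen (upd u i (a * b)) 1.
Proof.
move=> Ha Hb.
have Hgen : forall j, j != i -> inGen (upd u i (a * b)) (u j).
  move=> j ji; have E : upd u i (a * b) j = u j by rewrite /upd (negbTE ji).
  by rewrite -[X in inGen _ X]E; apply: inGen_gen.
have Hab : inGen (upd u i (a * b)) (a * b).
  have E : upd u i (a * b) i = a * b by rewrite /upd eqxx.
  by rewrite -[X in inGen _ X]E; apply: inGen_gen.
have Hia : inGen (upd u i (a * b)) a.
  rewrite -[X in inGen _ X]mulr1; apply: (inGen_incl _ Hb) => j.
  case: (eqVneq j i) => [->|ji].
    have -> : upd u i b i = b by rewrite /upd eqxx.
    done.
  have -> : upd u i b j = u j by rewrite /upd (negbTE ji).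
  by apply: inGen_mul; apply: Hgen.
rewrite -[X in inGen _ X]mul1r; apply: (inGen_incl _ Ha) => j; rewrite mul1r.
case: (eqVneq j i) => [->|ji].
  have -> : upd u i a i = a by rewrite /upd eqxx.
  done.
have -> : upd u i a j = u j by rewrite /upd (negbTE ji).
exact: Hgen.
Qed.

Definition chainfree n (s : 'I_n -> seq nat) := forall n0 p, prime p ->
  exists i, forall d, d \in s i -> forall e, d <> (n0 * p ^ e)%N.

Definition posfam n (s : 'I_n -> seq nat) := forall i d, d \in s i -> (0 < d)%N.

Lemma base_family n (s : 'I_n -> seq nat) : posfam s -> chainfree s ->
  (forall i, size (s i) <= 1)%N -> inGen (fun i => \prod_(d <- s i) 'Phi_d) 1.
Proof.
move=> Hpos Hch Hsz.
case: (pickP (fun i => size (s i) == 0%N)) => [i /eqP/size0nil Ei|H0].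
  have E : (fun i => \prod_(d <- s i) 'Phi_d) i = 1 by rewrite /= Ei big_nil.
  by rewrite -[X in inGen _ X]E; apply: inGen_gen.
pose d j := head 0%N (s j).
have Es : forall j, s j = [:: d j].
  move=> j; have := Hsz j; have := H0 j; rewrite /d.
  by case: (s j) => [|x [|y t]].
have dpos : forall j, (0 < d j)%N by move=> j; apply: (Hpos j); rewrite Es mem_seq1.
have [i [j nl]] : exists i j, ~ linked (d i) (d j).
  apply: not_all_linked => // n0 p pp.
  have [i Hi] := Hch n0 p pp; exists i => e; apply: Hi; by rewrite Es mem_seq1.
have [u [v E]] := Phi_comax (dpos i) (dpos j) nl.
have G : forall k, inGen (fun i => \prod_(d <- s i) 'Phi_d) 'Phi_(d k).
  by move=> k; have := inGen_gen (fun i => \prod_(d <- s i) 'Phi_d) k; rewrite Es big_seq1.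
rewrite [X in inGen _ X]E; apply: inGen_add; apply: inGen_mul; exact: G.
Qed.

Lemma sum_upd n (s : 'I_n -> seq nat) i x :
  (\sum_j size (upd s i x j) + size (s i) = \sum_j size (s j) + size x)%N.
Proof.
rewrite (bigD1 i) //= [in RHS](bigD1 i) //= /upd eqxx.
rewrite (eq_bigr (fun j => size (s j))); first lia.
by move=> j /negbTE ->.
Qed.

Lemma upd_sub n (s : 'I_n -> seq nat) i x : {subset x <= s i} ->
  forall j, {subset upd s i x j <= s j}.
Proof. by move=> H j; rewrite /upd; case: eqP => [->|_]. Qed.

Lemma posfam_sub n (s t : 'I_n -> seq nat) : (forall j, {subset t j <= s j}) ->
  posfam s -> posfam t.
Proof. by move=> H Hp i d /H; apply: Hp. Qed.

Lemma chainfree_sub n (s t : 'I_n -> seq nat) : (forall j, {subset t j <= s j}) ->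
  chainfree s -> chainfree t.
Proof.
move=> H Hc n0 p pp; have [i Hi] := Hc n0 p pp; exists i => d /H; exact: Hi.
Qed.

Lemma unit_family m n (s : 'I_n -> seq nat) : (\sum_i size (s i) <= m)%N ->
  posfam s -> chainfree s -> inGen (fun i => \prod_(d <- s i) 'Phi_d) 1.
Proof.
elim: m n s => [|m IH] n s Hm Hpos Hch.
  apply: base_family => // i; apply: leq_trans (leq_trans _ Hm) _ => //.
  by rewrite (bigD1 i) //= leq_addr.
case: (pickP (fun i => 1 < size (s i))%N) => [i hi|H1]; last first.
  by apply: base_family => // i; move: (H1 i) => /= /negbT; rewrite -leqNgt.
case Es: (s i) hi => [|d s'] //= hs'.
pose U := fun j => \prod_(d <- s j) 'Phi_d.
have Hsub1 : {subset [:: d] <= s i} by move=> x; rewrite Es mem_seq1 inE => ->.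
have Hsub2 : {subset s' <= s i} by move=> x; rewrite Es inE => ->; rewrite orbT.
have Hm' : forall x, (size x < size (s i))%N -> (\sum_j size (upd s i x j) <= m)%N.
  move=> x hx; have := sum_upd s i x.
  move: Hm; rewrite -ltnS; lia.
have H1 : inGen (upd U i 'Phi_d) 1.
  apply: (inGen_ext (u := fun j => \prod_(d <- upd s i [:: d] j) 'Phi_d)).
    by move=> j; rewrite /upd /U; case: eqP => // _; rewrite big_seq1.
  apply: (IH _ _ (Hm' _ _)).
  - by rewrite Es /=; lia.
  - exact: (posfam_sub (upd_sub Hsub1)).
  - exact: (chainfree_sub (upd_sub Hsub1)).
have H2 : inGen (upd U i (\prod_(d <- s') 'Phi_d)) 1.
  apply: (inGen_ext (u := fun j => \prod_(d <- upd s i s' j) 'Phi_d)).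
    by move=> j; rewrite /upd /U; case: eqP.
  apply: (IH _ _ (Hm' _ _)).
  - by rewrite Es.
  - exact: (posfam_sub (upd_sub Hsub2)).
  - exact: (chainfree_sub (upd_sub Hsub2)).
apply: (inGen_ext (u := upd U i ('Phi_d * \prod_(d <- s') 'Phi_d))).
  by move=> j; rewrite /upd /U; case: eqP => // ->; rewrite Es big_cons.
exact: unit_split.
Qed.

End C2.
Import C2.

Module C4.
Set Implicit Arguments. Unset Strict Implicit. Unset Printing Implicit Defensive.
Local Open Scope ring_scope.

Local Notation P := {poly int}.

Section Poly.
Variables l k : nat.
Hypothesis hkl : (k <= l)%N.

Definition Pe (f : nat -> nat) : P := \prod_(d < l.+1) 'Phi_d ^+ f d.

Lemma Pe_ext f g : f =1 g -> Pe f = Pe g.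
Proof. by move=> H; apply: eq_bigr => d _; rewrite H. Qed.

Lemma PeD f g : Pe f * Pe g = Pe (fun d => f d + g d)%N.
Proof. by rewrite /Pe -big_split; apply: eq_bigr => d _; rewrite exprD. Qed.

Lemma Pe0 : Pe (fun _ => 0%N) = 1.
Proof. by rewrite /Pe big1 // => d _; rewrite expr0. Qed.

Lemma Pe_prod n (F : 'I_n -> nat -> nat) :
  \prod_(j < n) Pe (F j) = Pe (fun d => \sum_(j < n) F j d)%N.
Proof.
elim: n F => [|n IH] F.
  by rewrite big_ord0 -Pe0; apply: Pe_ext => d; rewrite big_ord0.
rewrite big_ord_recr /= IH PeD; apply: Pe_ext => d.
by rewrite [in RHS]big_ord_recr.
Qed.

Lemma qbr_Pe t : (0 < t)%N -> (t <= l)%N -> qbr t = Pe (fun d => (d %| t)%N).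
Proof.
move=> t0 tl.
rewrite (_ : qbr t = qn t) // (qn_cyc t0 (tl : (t < l.+1)%N)) big_mkcond.
by apply: eq_bigr => d _; case: (d %| t)%N; rewrite ?expr1 ?expr0.
Qed.

Lemma hlki_Pe i : (i <= k)%N -> hlki l k i = Pe (E l k i).
Proof.
move=> ik.
rewrite /hlki /qfact /qfall.
rewrite (eq_bigr (fun j : 'I_(k - i) => Pe (fun d => (d %| l - i - j)%N))); last first.
  move=> j _; apply: qbr_Pe; have := ltn_ord j; lia.
rewrite [X in _ * X](eq_bigr (fun j : 'I_i => Pe (fun d => (d %| i - j)%N))); last first.
  move=> j _; apply: qbr_Pe; have := ltn_ord j; lia.
by rewrite !Pe_prod PeD.
Qed.

Definition emin (d : nat) : nat :=
  foldr (fun i acc => minn (E l k i d) acc) (E l k 0 d) (iota 0 k.+1).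

Lemma foldr_min_le (F : nat -> nat) x0 r j : j \in r ->
  (foldr (fun i acc => minn (F i) acc) x0 r <= F j)%N.
Proof.
elim: r => [//|a r IH]; rewrite inE => /orP[/eqP->|jr] /=.
  exact: geq_minl.
by rewrite geq_min IH ?orbT.
Qed.

Lemma foldr_min_ge (F : nat -> nat) x0 r a : (a <= x0)%N ->
  (forall j, j \in r -> a <= F j)%N -> (a <= foldr (fun i acc => minn (F i) acc) x0 r)%N.
Proof.
move=> ax0; elim: r => [//|b r IH] H /=.
rewrite leq_min H ?mem_head //= IH // => j jr; apply: H; by rewrite inE jr orbT.
Qed.

Lemma emin_le i d : (i <= k)%N -> (emin d <= E l k i d)%N.
Proof. by move=> ik; apply: foldr_min_le; rewrite mem_iota. Qed.

Lemma emin_ge i d : (forall j, j <= k -> E l k i d <= E l k j d)%N -> (E l k i d <= emin d)%N.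
Proof.
move=> H; apply: foldr_min_ge; first exact: H.
by move=> j; rewrite mem_iota add0n ltnS => /H.
Qed.

Definition lst (f : nat -> nat) : seq nat := flatten [seq nseq (f d) d | d <- iota 0 l.+1].

Lemma lst_prod f : \prod_(x <- lst f) 'Phi_x = Pe f.
Proof.
rewrite /lst; have -> : iota 0 l.+1 = index_iota 0 l.+1 by rewrite /index_iota subn0.
rewrite big_flatten big_map big_mkord /Pe.
apply: eq_bigr => d _; rewrite big_nseq.
by elim: (f d) => [|n IH] //=; rewrite IH exprS.
Qed.

Lemma mem_lst f x : (x \in lst f) = (x < l.+1)%N && (0 < f x)%N.
Proof.
apply/flatten_mapP/andP => [[d]|[xl fx]].
  by rewrite mem_iota add0n mem_nseq => dl /andP[fd /eqP->].
by exists x; rewrite ?mem_iota ?add0n ?mem_nseq ?fx ?eqxx.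
Qed.

Lemma E0 i : (i <= k)%N -> E l k i 0 = 0%N.
Proof.
move=> ik; rewrite /E !big1 // => j _; rewrite dvd0n; have := ltn_ord j; lia.
Qed.

Lemma core_poly : exists (g : P) (w c : 'I_k.+1 -> P),
  (forall i : 'I_k.+1, hlki l k i = g * w i) /\ \sum_i c i * w i = 1.
Proof.
pose f (i : nat) d := (E l k i d - emin d)%N.
exists (Pe emin), (fun i => Pe (f i)).
pose s (i : 'I_k.+1) := lst (f i).
have Hpos : posfam s.
  move=> i x; rewrite mem_lst => /andP[_ fx].
  case: x fx => // ; rewrite /f E0 //; exact: (ltn_ord i).
have Hch : chainfree s.
  move=> n0 p pp.
  have [i [ik Hi]] := key hkl n0 pp.
  exists (Ordinal (ik : (i < k.+1)%N)) => x; rewrite mem_lst /= => /andP[xl fx] e Ex.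
  have x0 : (0 < x)%N by apply: (Hpos (Ordinal (ik : (i < k.+1)%N))); rewrite mem_lst xl fx.
  move: fx; rewrite /f subn_gt0 ltnNge; apply/negP/negPn.
  apply: emin_ge => j jk; rewrite Ex; apply: Hi => //; rewrite -Ex //.
have [c Hc] := unit_family (leqnn _) Hpos Hch.
exists c; split.
  move=> i; have ik : (i <= k)%N by rewrite -ltnS.
  rewrite hlki_Pe // PeD; apply: Pe_ext => d.
  by rewrite /f subnKC // emin_le.
rewrite [RHS]Hc; apply: eq_bigr => i _; by rewrite /s lst_prod.
Qed.

End Poly.

End C4.
Import C4.

Local Open Scope ring_scope.

Lemma core (l k : nat) (hkl : (k <= l)%N) : exists (g : {poly int}) (w c : 'I_k.+1 -> {poly int}),
  (forall i : 'I_k.+1, hlki l k i = g * w i) /\ \sum_i c i * w i = 1.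
Proof. exact: (@core_poly l k hkl). Qed.

Set Implicit Arguments. Unset Strict Implicit.

Lemma tofXn_neq0 n : tof ('X^n : {poly int}) != 0.
Proof. by rewrite tofrac_eq0 monic_neq0 // monicXn. Qed.

Lemma inL_tof p : inLaurent (tof p).
Proof. by exists p, 0%N; rewrite expr0 tofrac1 divr1. Qed.

Lemma inL_mul x y : inLaurent x -> inLaurent y -> inLaurent (x * y).
Proof.
move=> [p [n ->]] [p' [n' ->]]; exists (p * p'), (n + n')%N.
by rewrite exprD !tofracM mulrACA invfM.
Qed.

Lemma inL_add x y : inLaurent x -> inLaurent y -> inLaurent (x + y).
Proof.
move=> [p [n ->]] [p' [n' ->]]; exists (p * 'X^n' + p' * 'X^n), (n + n')%N.
have h1 := tofXn_neq0 n; have h2 := tofXn_neq0 n'.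
rewrite (@addf_div Lfield _ _ _ _ h1 h2).
rewrite exprD.
rewrite !tofracM.
rewrite tofracD.
rewrite !tofracM.
done.
Qed.

Lemma inL_sum n (f : 'I_n -> Lfield) : (forall i, inLaurent (f i)) -> inLaurent (\sum_i f i).
Proof.
move=> H; elim/big_ind: _ => //; last by move=> x y; apply: inL_add.
by rewrite -tofrac0; apply: inL_tof.
Qed.

Lemma ldvd_fam l k (d : Lfield) : (forall i : 'I_k.+1, ldvd d (tof (hlki l k i))) ->
  exists e : 'I_k.+1 -> Lfield, forall i, inLaurent (e i) /\ tof (hlki l k i) = d * e i.
Proof. by move=> H; apply: (fin_all_exists H). Qed.

Unset Implicit Arguments.

Theorem proposition4p3 (l k : nat) (hkl : (k <= l)%N) :
  (exists g, isGCDlk l k g) /\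
  (forall g, isGCDlk l k g ->
     forall x, inLaurent x -> (inIlk l k x <-> ldvd g x)).
Proof.
have [g [w [c [Hh Hc]]]] := @core l k hkl.
have GI : tof g = \sum_i tof (c i) * tof (hlki l k i).
  rewrite -[g]mulr1 -Hc mulr_sumr rmorph_sum; apply: eq_bigr => i _.
  by rewrite Hh -tofracM mulrCA.
have Gdiv : forall i : 'I_k.+1, ldvd (tof g) (tof (hlki l k i)).
  by move=> i; exists (tof (w i)); split; [apply: inL_tof | rewrite Hh tofracM].
have Ggcd : isGCDlk l k (tof g).
  split; first exact: inL_tof.
  split; first exact: Gdiv.
  move=> d _ /ldvd_fam [e He].
  exists (\sum_i tof (c i) * e i).
  split.
    apply: inL_sum => i; apply: inL_mul; first exact: inL_tof.
    by case: (He i).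
  rewrite GI mulr_sumr; apply: eq_bigr => i _.
  by case: (He i) => _ ->; rewrite mulrCA.
split; first by exists (tof g).
move=> g' [g'L [g'div g'max]] x xL; split.
- move=> [cc [ccL ->]].
  have [e He] := ldvd_fam g'div.
  exists (\sum_i cc i * e i); split.
    apply: inL_sum => i; apply: inL_mul => //.
    by case: (He i).
  rewrite mulr_sumr; apply: eq_bigr => i _.
  by case: (He i) => _ ->; rewrite mulrCA.
- move=> [t [tL ->]].
  have [s [sL Hs]] := g'max (tof g) (inL_tof g) Gdiv.
  exists (fun i => tof (c i) * (s * t)); split.
    by move=> i; apply: inL_mul; [apply: inL_tof | apply: inL_mul].
  rewrite Hs GI !mulr_suml; apply: eq_bigr => i _.
  by rewrite -!mulrA; congr (_ * _); rewrite mulrC mulrA.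
Qed.
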